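(* Let $n$ be a non-negative integer. Then every subgroup of $\mathbb{R}^n$, equipped with the subspace topology inherited from the Euclidean topology, is $g$-reversible.
   Context: All topological groups are assumed Hausdorff. A topological group $G$ is called $g$-reversible if every continuous automorphism of $G$ (i.e. every continuous group isomorphism of $G$ onto itself) is an open map. $\mathbb{R}^n$ denotes the additive group with the Euclidean topology. *)

(* Defs.v *)
From Stdlib Require Import Reals.
Open Scope R_scope.

(* Points of R^n are represented as functions nat -> R whose coordinates
   of index >= n vanish (so distinct points of R^n are distinct functions). *)
Definition in_Rn (n : nat) (x : nat -> R) : Prop :=
  forall i : nat, (n <= i)%nat -> x i = 0.

Definition vadd (x y : nat -> R) : nat -> R := fun i => x i + y i.
Definition vopp (x : nat -> R) : nat -> R := fun i => - x i.
Definition vzero : nat -> R := fun _ => 0.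

Fixpoint rsum (n : nat) (f : nat -> R) : R :=
  match n with
  | O => 0
  | S k => rsum k f + f k
  end.

Definition edist (n : nat) (x y : nat -> R) : R :=
  sqrt (rsum n (fun i => (x i - y i) ^ 2)).

Definition is_subgroup_Rn (n : nat) (H : (nat -> R) -> Prop) : Prop :=
  (forall x, H x -> in_Rn n x) /\
  H vzero /\
  (forall x y, H x -> H y -> H (vadd x y)) /\
  (forall x, H x -> H (vopp x)).

Definition rel_open (n : nat) (H U : (nat -> R) -> Prop) : Prop :=
  (forall x, U x -> H x) /\
  (forall x, U x -> exists eps, 0 < eps /\
      forall y, H y -> edist n x y < eps -> U y).

Definition cont_automorphism (n : nat) (H : (nat -> R) -> Prop)
    (f : (nat -> R) -> (nat -> R)) : Prop :=
  (forall x, H x -> H (f x)) /\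
  (forall x y, H x -> H y -> f (vadd x y) = vadd (f x) (f y)) /\
  (forall x y, H x -> H y -> f x = f y -> x = y) /\
  (forall y, H y -> exists x, H x /\ f x = y) /\
  (forall x, H x -> forall eps, 0 < eps -> exists delta, 0 < delta /\
      forall y, H y -> edist n x y < delta -> edist n (f x) (f y) < eps).

Definition open_map_on (n : nat) (H : (nat -> R) -> Prop)
    (f : (nat -> R) -> (nat -> R)) : Prop :=
  forall U, rel_open n H U ->
    rel_open n H (fun y => exists x, U x /\ f x = y).

Definition g_reversible_sub (n : nat) (H : (nat -> R) -> Prop) : Prop :=
  forall f, cont_automorphism n H f -> open_map_on n H f.

(* Main.v *)
Require Import Defs.
From Stdlib Require Import Reals FunctionalExtensionality.
From mathcomp Require Import all_boot all_order all_algebra.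
From mathcomp Require Import Rstruct.
From mathcomp Require Import ring lra zify.
From Stdlib Require Import Lia.
Import Order.TTheory GRing.Theory Num.Theory.
Set Warnings "-notation-overridden,-ambiguous-paths".
Local Open Scope ring_scope.

Lemma rsumE k (g : nat -> R) : rsum k g = \sum_(i < k) g i.
Proof. elim: k => [|k IH] /=; first by rewrite big_ord0. by rewrite big_ord_recr /= IH. Qed.

Lemma edistE n (x y : nat -> R) : edist n x y = Num.sqrt (\sum_(i < n) (x i - y i) ^+ 2).
Proof.
rewrite /edist RsqrtE rsumE; congr Num.sqrt; apply: eq_bigr => i _.
by rewrite RpowE RminusE.
Qed.

Lemma edist_coord n (x y : nat -> R) (i : 'I_n) : `|x i - y i| <= edist n x y.
Proof.
rewrite edistE -sqrtr_sqr ler_wsqrtr // (bigD1 i) //= lerDl.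
by apply: sumr_ge0 => j _; rewrite sqr_ge0.
Qed.

Lemma sqrt_sum_le k (a : 'I_k -> R) :
  Num.sqrt (\sum_(i < k) a i ^+ 2) <= \sum_(i < k) `|a i|.
Proof.
have H0 : 0 <= \sum_(i < k) `|a i| by apply: sumr_ge0.
rewrite -(ger0_norm H0) -sqrtr_sqr ler_wsqrtr //.
elim: k a {H0} => [|k IH] a; first by rewrite !big_ord0 expr0n.
rewrite !big_ord_recr /=.
set s := \sum_(i < k) `|a (widen_ord (leqnSn k) i)|.
have s0 : 0 <= s by apply: sumr_ge0.
have := IH (fun i => a (widen_ord (leqnSn k) i)).
rewrite -/s => h.
have t0 := normr_ge0 (a ord_max).
rewrite -(real_normK (num_real (a ord_max))).
nra.
Qed.

Lemma edist_le_sum n (x y : nat -> R) : edist n x y <= \sum_(i < n) `|x i - y i|.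
Proof. rewrite edistE; exact: (sqrt_sum_le n (fun i => x i - y i)). Qed.

Lemma bound_mul m p (u : 'rV[R]_m) (A : 'M[R]_(m, p)) t :
  (forall j, `|u 0 j| <= t) ->
  forall i, `|(u *m A) 0 i| <= t * \sum_(j < m) `|A j i|.
Proof.
move=> hu i; rewrite mxE mulr_sumr; apply: le_trans (ler_norm_sum _ _ _) _.
apply: ler_sum => j _; rewrite normrM; apply: ler_wpM2r => //.
Qed.

Lemma bound_mul_sum m p (u : 'rV[R]_m) (A : 'M[R]_(m, p)) t :
  (forall j, `|u 0 j| <= t) ->
  \sum_(i < p) `|(u *m A) 0 i| <= t * \sum_(i < p) \sum_(j < m) `|A j i|.
Proof.
move=> hu; rewrite mulr_sumr; apply: ler_sum => i _; exact: bound_mul.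
Qed.

Lemma small_eq0 (x : R) : (forall e, 0 < e -> `|x| <= e) -> x = 0.
Proof.
move=> h; apply/eqP; rewrite -normr_eq0; apply/negPn/negP => hx.
have hp : 0 < `|x| by rewrite lt_def hx normr_ge0.
have h1 : 0 < `|x| / 2 by lra.
have := h _ h1; lra.
Qed.

Section Grp.
Variables (n : nat) (H : (nat -> R) -> Prop) (f : (nat -> R) -> (nat -> R)).
Hypothesis hH : is_subgroup_Rn n H.
Hypothesis hf : cont_automorphism n H f.

Lemma H0 : H vzero. Proof. by case: hH => _ []. Qed.
Lemma Hadd {x y} : H x -> H y -> H (vadd x y). Proof. by case: hH => _ [_ [h _]]; apply: h. Qed.
Lemma Hopp {x} : H x -> H (vopp x). Proof. by case: hH => _ [_ [_ h]]; apply: h. Qed.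
Lemma fH {x} : H x -> H (f x). Proof. by case: hf => h _; apply: h. Qed.
Lemma fadd {x y} : H x -> H y -> f (vadd x y) = vadd (f x) (f y).
Proof. by case: hf => _ [h _]; apply: h. Qed.

Lemma f0 : f vzero = vzero.
Proof.
have e : vadd vzero vzero = vzero.
  by apply: functional_extensionality => i; rewrite /vadd /vzero RplusE R0E addr0.
have := fadd H0 H0; rewrite e => h.
apply: functional_extensionality => i.
have := congr1 (fun g => g i) h; rewrite /vadd /vzero RplusE R0E /= => h'.
lra.
Qed.

Lemma fopp {x} : H x -> f (vopp x) = vopp (f x).
Proof.
move=> hx.
have e : vadd x (vopp x) = vzero.
  by apply: functional_extensionality => i; rewrite /vadd /vopp /vzero RplusE RoppE R0E subrr.
have := fadd hx (Hopp hx); rewrite e f0 => h.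
apply: functional_extensionality => i.
have := congr1 (fun g => g i) h; rewrite /vadd /vopp /vzero RplusE RoppE R0E /= => h'.
lra.
Qed.

Definition zs (z : int) (x : nat -> R) : nat -> R := fun i => z%:~R * x i.

Lemma nsP (k : nat) {x} : H x -> H (zs k x) /\ f (zs k x) = zs k (f x).
Proof.
move=> hx; elim: k => [|k [IH1 IH2]].
  have e : forall y, zs 0 y = vzero.
    by move=> y; apply: functional_extensionality => i; rewrite /zs /vzero R0E mul0r.
  by rewrite !e f0; split => //; exact: H0.
have e : forall y, zs k.+1 y = vadd (zs k y) y.
  move=> y; apply: functional_extensionality => i.
  by rewrite /zs /vadd RplusE intS intrD mulrDl mul1r addrC.
rewrite !e; split; first exact: Hadd.
by rewrite fadd // IH2.
Qed.

Lemma zsP z {x} : H x -> H (zs z x) /\ f (zs z x) = zs z (f x).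
Proof.
move=> hx; case: z => k; first exact: nsP.
have e : forall y, zs (Negz k) y = vopp (zs k.+1 y).
  move=> y; apply: functional_extensionality => i.
  by rewrite /zs /vopp RoppE NegzE intrN mulNr.
have [h1 h2] := nsP k.+1 hx.
rewrite !e; split; first exact: Hopp.
by rewrite fopp // h2.
Qed.

Lemma combP m (z : nat -> int) (b : nat -> nat -> R) :
  (forall j, (j < m)%N -> H (b j)) ->
  exists y, H y /\ (forall i, y i = \sum_(j < m) (z j)%:~R * b j i) /\
    (forall i, f y i = \sum_(j < m) (z j)%:~R * f (b j) i).
Proof.
elim: m => [|m IH] hb.
  exists vzero; split; first exact: H0.
  by split => i; rewrite ?f0 big_ord0 /vzero R0E.
have [y [hy [e1 e2]]] := IH (fun j hj => hb j (ltnW hj)).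
have hbm : H (b m) by apply: hb.
have [h1 h2] := zsP (z m) hbm.
exists (vadd y (zs (z m) (b m))); split; first exact: Hadd.
split => i; rewrite ?fadd // ?h2 /vadd RplusE big_ord_recr /= ?e1 ?e2 //.
Qed.

End Grp.

Definition rv n (x : nat -> R) : 'rV[R]_n := \row_(i < n) x i.
Definition Bm n m (b : nat -> nat -> R) : 'M[R]_(m, n) := \matrix_(j < m, i < n) b j i.

Lemma free_ext {n k : nat} {b : nat -> nat -> R} {h : nat -> R} :
  row_free (Bm n k b) -> ~~ (rv n h <= Bm n k b)%MS ->
  row_free (Bm n k.+1 (fun j => if j == k then h else b j)).
Proof.
move=> fb nh; apply/inj_row_free => v hv.
set B' := Bm n k.+1 _ in hv.
have hrow : forall j : 'I_k, row (widen_ord (leqnSn k) j) B' = row j (Bm n k b).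
  move=> j; apply/rowP => i; rewrite !mxE /= ltn_eqF //.
have hlast : row ord_max B' = rv n h by apply/rowP => i; rewrite !mxE /= eqxx.
pose v1 : 'rV[R]_k := \row_j v 0 (widen_ord (leqnSn k) j).
have hv1 : v1 *m Bm n k b + v 0 ord_max *: rv n h = 0.
  rewrite -hv (mulmx_sum_row v) big_ord_recr /= hlast mulmx_sum_row.
  congr (_ + _); apply: eq_bigr => j _; by rewrite hrow mxE.
have [c0|cn0] := eqVneq (v 0 ord_max) 0.
  move: hv1; rewrite c0 scale0r addr0 => hv1.
  have v10 : v1 = 0 by apply: (row_free_inj fb); rewrite hv1 mul0mx.
  apply/rowP => j; rewrite mxE.
  have [jk|kj] := ltnP j k.
    have := congr1 (fun w : 'rV_k => w 0 (Ordinal jk)) v10; rewrite !mxE /=.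
    by have -> : widen_ord (leqnSn k) (Ordinal jk) = j by apply: val_inj.
  have -> : j = ord_max by apply: val_inj => /=; have := ltn_ord j; lia.
  by rewrite c0.
exfalso; move/negP: nh; apply.
have e : rv n h = (- (v 0 ord_max)^-1 *: v1) *m Bm n k b.
  rewrite -scalemxAl; move/eqP: hv1; rewrite addr_eq0 => /eqP hv1.
  by rewrite hv1 scaleNr scalerN opprK scalerA mulVf // scale1r.
by rewrite e submxMl.
Qed.

Lemma basis_ex n (H : (nat -> R) -> Prop) :
  exists m (b : nat -> nat -> R), (forall j, (j < m)%N -> H (b j)) /\
    row_free (Bm n m b) /\ forall h, H h -> (rv n h <= Bm n m b)%MS.
Proof.
suff: forall d k b, d = (n - k)%N -> (forall j, (j < k)%N -> H (b j)) ->
   row_free (Bm n k b) -> exists m (b : nat -> nat -> R), (forall j, (j < m)%N -> H (b j)) /\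
    row_free (Bm n m b) /\ forall h, H h -> (rv n h <= Bm n m b)%MS.
  move=> /(_ _ 0%N (fun _ => vzero) erefl); apply => //.
  by rewrite /row_free -leqn0 rank_leq_row.
elim=> [|d IH] k b hd hb fb.
- exists k, b; split => //; split => // h hh.
  apply/negPn/negP => nh.
  have := free_ext fb nh; rewrite /row_free => /eqP hr.
  have := rank_leq_col (Bm n k.+1 (fun j => if j == k then h else b j)).
  rewrite hr; lia.
- case: (Classical_Prop.classic (forall h, H h -> (rv n h <= Bm n k b)%MS)) => hall.
    by exists k, b.
  have [h hh] := Classical_Pred_Type.not_all_ex_not _ _ hall.
  have [hh1 nh] := Classical_Prop.imply_to_and _ _ hh.
  have nh' : ~~ (rv n h <= Bm n k b)%MS by apply/negP.
  apply: (IH k.+1 (fun j => if j == k then h else b j)).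
  + have := free_ext fb nh'; rewrite /row_free => /eqP hr.
    have := rank_leq_col (Bm n k.+1 (fun j => if j == k then h else b j)).
    rewrite hr; lia.
  + move=> j hj; case: eqP => // jk; apply: hb; lia.
  + exact: free_ext.
Qed.

Lemma le_sum_term (k : nat) (G : 'I_k -> R) i :
  (forall j, 0 <= G j) -> G i <= \sum_(j < k) G j.
Proof.
move=> h; rewrite (bigD1 i) //= lerDl; apply: sumr_ge0 => j _; exact: h.
Qed.

Lemma toRlt {x y : R} : x < y -> Rlt x y. Proof. by move/RltP. Qed.
Lemma ofRlt {x y : R} : Rlt x y -> x < y. Proof. by move/RltP. Qed.

Definition fr (x : R) := x - (Num.floor x)%:~R.
Arguments fr x%_ring_scope.

Lemma fr_itv x : 0 <= fr x < 1.
Proof.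
have /andP[h1 h2] := floor_itv x; rewrite /fr intrD mulr1z in h2 *.
apply/andP; split; [rewrite subr_ge0 | rewrite ltrBlDl]; lra.
Qed.

Section Lin.
Variables (n : nat) (H : (nat -> R) -> Prop) (f : (nat -> R) -> (nat -> R)).
Hypothesis hH : is_subgroup_Rn n H.
Hypothesis hf : cont_automorphism n H f.
Variables (m : nat) (b : nat -> nat -> R).
Hypothesis hb : forall j, (j < m)%N -> H (b j).

Lemma fcont0 eps : 0 < eps -> exists d, 0 < d /\
  forall y, H y -> edist n vzero y < d -> edist n vzero (f y) < eps.
Proof.
move=> e0; case: hf => _ [_ [_ [_ hc]]].
have [d [d0 hd]] := hc _ (H0 n H hH) eps (toRlt e0).
exists d; split; first exact: ofRlt.
move=> y hy hdy; have := hd y hy (toRlt hdy); rewrite (f0 n H f hH hf); exact: ofRlt.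
Qed.

Lemma lin h c : H h -> c *m Bm n m b = rv n h ->
  c *m Bm n m (fun j => f (b j)) = rv n (f h).
Proof.
move=> hh hc; apply/rowP => i; apply/eqP; rewrite eq_sym -subr_eq0; apply/eqP.
set B := Bm n m b; set F := Bm n m (fun j => f (b j)).
apply: small_eq0 => eps e0.
have e2 : 0 < eps / 2 by lra.
have [d [d0 hd]] := fcont0 (eps / 2) e2.
set SB := \sum_(i0 < n) \sum_(j < m) `|B j i0|.
set SF := \sum_(i0 < n) \sum_(j < m) `|F j i0|.
have SB0 : 0 <= SB by apply: sumr_ge0 => ? _; apply: sumr_ge0.
have SF0 : 0 <= SF by apply: sumr_ge0 => ? _; apply: sumr_ge0.
set mu := Num.min d (eps / 2).
have mu0 : 0 < mu by rewrite lt_min d0 e2.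
have mud : mu <= d by rewrite ge_min lexx.
have mue : mu <= eps / 2 by rewrite ge_min lexx orbT.
set M' := Num.truncn ((SB + SF + 1) / mu).
have hM : (SB + SF + 1) / mu < M'.+1%:R := truncnS_gt _.
have M0 : 0 < (M'.+1%:R : R) by rewrite ltr0n.
set t := (M'.+1%:R : R)^-1.
have t0 : 0 < t by rewrite invr_gt0.
have tM : t * M'.+1%:R = 1 by rewrite mulVf // lt0r_neq0.
have hK : SB + SF + 1 < M'.+1%:R * mu by rewrite -ltr_pdivrMr.
have hK' : t * (SB + SF + 1) < mu.
  by have := hK; rewrite -(ltr_pM2l t0) mulrA tM mul1r.
rewrite !mulrDr mulr1 in hK'.
have tSB0 : 0 <= t * SB by rewrite mulr_ge0 // ltW.
have tSF0 : 0 <= t * SF by rewrite mulr_ge0 // ltW.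
have tSB : t * SB < d by lra.
have tSF : t * SF <= eps / 2 by lra.
pose cell (k : 'I_(expn M'.+1 m).+1) : {ffun 'I_m -> 'I_M'.+1} :=
  [ffun j => inord (Num.truncn (M'.+1%:R * fr (k%:R * c 0 j)))].
have : ~~ injectiveb cell.
  apply/injectiveP => inj; have := leq_card cell inj; rewrite card_ffun !card_ord.
  by rewrite ltnn.
case/injectivePn => k1 [k2 ne ecell].
wlog lt12 : k1 k2 ne ecell / (k1 < k2)%N.
  move=> W; case: (ltngtP k1 k2) => [l|l|l]; first exact: (W k1 k2).
  - by apply: (W k2 k1) => //; rewrite eq_sym.
  - by move: ne; rewrite (val_inj l) eqxx.
have hj : forall j : 'I_m, `|fr (k2%:R * c 0 j) - fr (k1%:R * c 0 j)| <= t.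
  move=> j.
  have /andP[a1 a2] := fr_itv (k1%:R * c 0 j).
  have /andP[b1 b2] := fr_itv (k2%:R * c 0 j).
  have p1 : 0 <= M'.+1%:R * fr (k1%:R * c 0 j) by rewrite mulr_ge0 // ltW.
  have p2 : 0 <= M'.+1%:R * fr (k2%:R * c 0 j) by rewrite mulr_ge0 // ltW.
  have q1 : M'.+1%:R * fr (k1%:R * c 0 j) < M'.+1%:R by rewrite gtr_pMr.
  have q2 : M'.+1%:R * fr (k2%:R * c 0 j) < M'.+1%:R by rewrite gtr_pMr.
  have := congr1 (fun g : {ffun 'I_m -> 'I_M'.+1} => val (g j)) ecell; rewrite /= !ffunE !inordK; first last.
  - by rewrite ltnS -ltnS truncn_lt_nat.
  - by rewrite ltnS -ltnS truncn_lt_nat.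
  move=> et.
  have /andP[c1 c2] := truncn_itv p1.
  have /andP[d1 d2] := truncn_itv p2.
  rewrite et in c1 c2.
  set T := Num.truncn _ in c1 c2 d1 d2.
  have eT : (T.+1%:R : R) = T%:R + 1 by rewrite -addn1 natrD.
  rewrite eT in c2 d2.
  have e3 : `|fr (k2%:R * c 0 j) - fr (k1%:R * c 0 j)| =
     t * `|M'.+1%:R * (fr (k2%:R * c 0 j) - fr (k1%:R * c 0 j))|.
    by rewrite normrM (ger0_norm (ltW M0)) mulrA tM mul1r.
  rewrite e3; apply: ler_piMr; first exact: ltW.
  rewrite ler_norml mulrBr; apply/andP; split; lra.
pose z (j : nat) : int := if insub j is Some jj then
  (Num.floor (k2%:R * c 0 jj) - Num.floor (k1%:R * c 0 jj))%R else 0.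
have ez : forall jj : 'I_m, z jj = (Num.floor (k2%:R * c 0 jj) - Num.floor (k1%:R * c 0 jj))%R.
  by move=> jj; rewrite /z valK.
pose p := (k2 - k1)%N.
have ep : (p%:R : R) = k2%:R - k1%:R by rewrite natrB // ltnW.
have p1 : (1 : R) <= p%:R by rewrite ler1n subn_gt0.
have [y1 [hy1 [ey1 efy1]]] := combP n H f hH hf m z b hb.
have [hzs ezs] := zsP n H f hH hf (Posz p) hh.
set dd := vadd (zs (Posz p) h) (vopp y1).
have hdd : H dd := Hadd n H hH hzs (Hopp n H hH hy1).
have efd : f dd = vadd (zs p (f h)) (vopp (f y1)).
  by rewrite /dd (fadd n H f hf hzs (Hopp n H hH hy1)) (fopp n H f hH hf hy1) ezs.
pose del : 'rV[R]_m := \row_j (fr (k2%:R * c 0 j) - fr (k1%:R * c 0 j)).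
have hdel : forall j, `|del 0 j| <= t by move=> j; rewrite mxE; exact: hj.
have eh : forall i0 : 'I_n, h i0 = \sum_(j < m) c 0 j * b j i0.
  move=> i0; have := congr1 (fun w : 'rV_n => w 0 i0) hc; rewrite !mxE => <-.
  by apply: eq_bigr => j _; rewrite mxE.
have efh : forall i0 : 'I_n, rv n (f h) 0 i0 - (c *m F) 0 i0 = f h i0 - \sum_(j < m) c 0 j * f (b j) i0.
  move=> i0; rewrite !mxE; congr (_ - _); by apply: eq_bigr => j _; rewrite mxE.
have edd : forall i0 : 'I_n, dd i0 = (del *m B) 0 i0.
  move=> i0; rewrite /dd /vadd /vopp /zs RplusE RoppE ey1 eh mxE.
  rewrite -pmulrn ep mulr_sumr -sumrN -big_split /=; apply: eq_bigr => j _.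
  rewrite !mxE ez /fr intrB; ring.
have key : p%:R * (rv n (f h) 0 i - (c *m F) 0 i) = f dd i - (del *m F) 0 i.
  rewrite efh efd /vadd /vopp /zs RplusE RoppE efy1 mxE.
  rewrite -pmulrn ep mulrBr mulr_sumr.
  have -> : \sum_(j < m) del 0 j * F j i = \sum_(j < m) (del 0 j * f (b j) i) by apply: eq_bigr => j _; rewrite /F /Bm mxE.
  have -> : \sum_(j < m) (z j)%:~R * f (b j) i = \sum_(j < m) ((k2%:R - k1%:R) * (c 0 j * f (b j) i) - del 0 j * f (b j) i).
    apply: eq_bigr => j _; rewrite !mxE ez /fr intrB; ring.
  rewrite sumrB; ring.
have hdsmall : edist n vzero dd < d.
  apply: le_lt_trans (edist_le_sum _ _ _) _.
  rewrite (eq_bigr (fun i0 => `|(del *m B) 0 i0|)); last first.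
    by move=> i0 _; rewrite -edd /vzero R0E sub0r normrN.
  exact: le_lt_trans (@bound_mul_sum _ _ del B t hdel) tSB.
have hfd := hd dd hdd hdsmall.
have hfdi : `|f dd i| < eps / 2.
  apply: le_lt_trans hfd; have := edist_coord n vzero (f dd) i.
  by rewrite /vzero R0E sub0r normrN.
have hdF : `|(del *m F) 0 i| <= eps / 2.
  apply: le_trans (@bound_mul _ _ del F t hdel i) _; apply: le_trans tSF.
  apply: ler_wpM2l; first exact: ltW.
  rewrite /SF; apply: (@le_sum_term n (fun i0 : 'I_n => \sum_(j < m) `|F j i0|)) => i0; apply: sumr_ge0 => j _; exact: normr_ge0.
have hpe : `|p%:R * (rv n (f h) 0 i - (c *m F) 0 i)| <= eps.
  rewrite key; apply: le_trans (ler_normB _ _) _; lra.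
rewrite normrM (ger0_norm (ler0n _ _)) in hpe.
apply: le_trans hpe; apply: ler_peMl => //.
Qed.

End Lin.

Lemma edist_ge0 n (x y : nat -> R) : 0 <= edist n x y.
Proof. by rewrite edistE sqrtr_ge0. Qed.

Theorem theorem5p6 (n : nat) (H : (nat -> R) -> Prop) :
  is_subgroup_Rn n H -> g_reversible_sub n H.
Proof.
move=> hH f hf U [hU1 hU2].
have [m [b [hb [fb hspan]]]] := basis_ex n H.
set B := Bm n m b; set F := Bm n m (fun j => f (b j)).
have hl := lin n H f hH hf m b hb.
have [_ [_ [_ [fsurj _]]]] := hf.
have BF : (B <= F)%MS.
  apply/row_subP => j; have hbj := hb j (ltn_ord j).
  have [x [hx fx]] := fsurj _ hbj.
  have ex : row j B = rv n (b j) by apply/rowP => i; rewrite !mxE.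
  rewrite ex -fx -(hl x (rv n x *m pinvmx B) hx (mulmxKpV (hspan x hx))).
  exact: submxMl.
have fF : row_free F.
  rewrite /row_free eqn_leq rank_leq_row /=.
  by have := mxrankS BF; rewrite (eqP fb).
have inv : forall x, H x -> rv n x = rv n (f x) *m (pinvmx F *m B).
  move=> x hx; set c := rv n x *m pinvmx B.
  have hcB : c *m B = rv n x := mulmxKpV (hspan x hx).
  have hcF := hl x c hx hcB.
  by rewrite mulmxA -hcF mulmxKp.
set P := pinvmx F *m B.
set SP := \sum_(i < n) \sum_(j < n) `|P j i|.
have SP0 : 0 <= SP by apply: sumr_ge0 => ? _; apply: sumr_ge0.
split.
  by move=> y [x [ux <-]]; apply: (fH n H f hf); apply: hU1.
move=> y [x0 [ux0 <-]].
have [eps [e0 he]] := hU2 x0 ux0.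
have e0' := ofRlt e0.
pose eta := eps / (SP + 1).
have eta0 : 0 < eta by rewrite divr_gt0 //; lra.
exists eta; split; first exact: toRlt.
move=> w hw hdy; have hdy' := ofRlt hdy.
have [x [hx fx]] := fsurj w hw.
exists x; split => //; apply: he => //; apply: toRlt.
rewrite R0E in e0'.
set T := edist n (f x0) w in hdy'.
have T0 : 0 <= T := edist_ge0 _ _ _.
have eD : rv n x0 - rv n x = (rv n (f x0) - rv n (f x)) *m P.
  by rewrite mulmxBl {1}(inv x0 (hU1 _ ux0)) {1}(inv x hx).
have hu : forall j, `|(rv n (f x0) - rv n (f x)) 0 j| <= T.
  by move=> j; rewrite !mxE fx; exact: edist_coord.
apply: le_lt_trans (edist_le_sum _ _ _) _.
rewrite (eq_bigr (fun i => `|((rv n (f x0) - rv n (f x)) *m P) 0 i|)); last first.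
  by move=> i _; rewrite -eD !mxE.
apply: le_lt_trans (@bound_mul_sum _ _ _ P T hu) _.
have h1 : T * (SP + 1) < eta * (SP + 1) by rewrite ltr_pM2r //; lra.
have h2 : eta * (SP + 1) = eps by rewrite /eta mulfVK //; apply: lt0r_neq0; lra.
rewrite mulrDr mulr1 h2 in h1.
rewrite -/SP; lra.
Qed.
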